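(* Let $A=(i_1,\dots,i_a)$ be an ordered tuple of distinct elements of $I_d$, $\alpha\in\mathbb{Z}_2^{a,\mathrm{ev}}$, $j\in I_a$, and $r\ge0$. Then in $R_l[x_1,\dots,x_d]=R[x_1,\dots,x_d]/(x_1^l,\dots,x_d^l)$, $$x_{i_j}\,h^\alpha_r(A)=(-1)^{\alpha_j}\,h^\alpha_r(A)\,x_{\sigma_A(i_j)}.$$
   Context: $l,d\ge1$, $R$ a commutative ring, $I_a=\{1,\dots,a\}$. For an ordered tuple $A=(i_1,\dots,i_a)$ of distinct elements of $I_d$, $\sigma_A$ is the cyclic permutation $i_1\mapsto i_2\mapsto\dots\mapsto i_a\mapsto i_1$. For $\alpha\in\mathbb{Z}_2^a$, $|\alpha|=\sum_j\alpha_j$, $\mathbb{Z}_2^{a,\mathrm{ev}}$ is the set of $\alpha$ with $|\alpha|$ even, and $\epsilon^\alpha_j=\prod_{k<j}(-1)^{\alpha_k}$ (so $\epsilon^\alpha_1=1$). For $r\ge0$ and $\alpha\in\mathbb{Z}_2^{a,\mathrm{ev}}$, $h^\alpha_r(A)=\sum_{r_1+\dots+r_a=(a-1)(l-1)+r,\ r_j\ge0}\prod_{j=1}^a(\epsilon^\alpha_jx_{i_j})^{r_j}\in R_l[x_1,\dots,x_d]$. *)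

(* Defs.v *)
From HB Require Import structures.
From mathcomp Require Import all_boot all_algebra.
From mathcomp Require Export mpoly.
Set Implicit Arguments. Unset Strict Implicit. Unset Printing Implicit Defensive.
Import GRing.Theory.
Local Open Scope ring_scope.

(* Indices are 0-based: I_d is 'I_d, I_a is 'I_a.  An ordered tuple
   A = (i_1,...,i_a) of distinct elements is an injective map 'I_a -> 'I_d. *)

Definition epsA (a : nat) (alpha : 'I_a -> bool) (j : 'I_a) (R : comRingType) : R :=
  \prod_(k < a | (k < j)%N) (-1) ^+ alpha k.

Definition alpha_weight (a : nat) (alpha : 'I_a -> bool) : nat :=
  \sum_(k < a) (alpha k : nat).

(* the cyclic permutation sigma_A on the entries of A: i_j |-> i_{j+1}, i_a |-> i_1 *)
Definition sigmaA (a d : nat) (A : 'I_a -> 'I_d) (j : 'I_a) : 'I_d := A (ordS j).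

(* Each r_j is
   bounded by the total, so we sum over functions 'I_a -> 'I_(N+1). *)
Definition hA (R : comRingType) (d l a : nat) (A : 'I_a -> 'I_d)
    (alpha : 'I_a -> bool) (r : nat) : {mpoly R[d]} :=
  let N := ((a - 1) * (l - 1) + r)%N in
  \sum_(rr : {ffun 'I_a -> 'I_N.+1} | (\sum_(j < a) (rr j : nat))%N == N)
     \prod_(j < a) (epsA alpha j R *: 'X_(A j)) ^+ (rr j).

(* Equality in R_l[x_1..x_d] = R[x_1..x_d]/(x_1^l,...,x_d^l): the difference
   lies in the ideal generated by the x_i^l. *)
Definition eq_trunc (R : comRingType) (d l : nat) (p q : {mpoly R[d]}) : Prop :=
  exists c : 'I_d -> {mpoly R[d]}, p - q = \sum_(i < d) c i * 'X_i ^+ l.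

(* Main.v *)
Require Import Defs.
From HB Require Import structures.
From mathcomp Require Import all_boot all_algebra.
From mathcomp Require Import mpoly.
Import GRing.Theory.
Local Open Scope ring_scope.


Section HBsec.
Variables (S : comNzRingType) (a : nat) (y : 'I_a -> S).

Definition Tm b (rr : {ffun 'I_a -> 'I_b.+1}) : S := \prod_(m < a) y m ^+ rr m.
Definition cond b (P : pred 'I_a) M (rr : {ffun 'I_a -> 'I_b.+1}) : bool :=
  ((\sum_(m < a) (rr m : nat))%N == M) && [forall m, ~~ P m ==> ((rr m : nat) == 0%N)].
Arguments Tm {b} rr.
Arguments cond b P M rr.
Definition HB b P M := \sum_(rr | cond b P M rr) Tm rr.

Lemma sum_ge (rr : 'I_a -> nat) m : (rr m <= \sum_i rr i)%N.
Proof. by rewrite (bigD1 m) //= leq_addr. Qed.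

Lemma HB_widen b P M : (M <= b)%N -> HB b P M = HB b.+1 P M.
Proof.
move=> Mb; rewrite /HB.
pose h' (s : {ffun 'I_a -> 'I_b.+2}) : {ffun 'I_a -> 'I_b.+1} := [ffun m => inord (s m)].
pose h (rr : {ffun 'I_a -> 'I_b.+1}) : {ffun 'I_a -> 'I_b.+2} :=
  [ffun m => widen_ord (leqnSn _) (rr m)].
symmetry; rewrite (reindex_onto h h').
  apply: eq_big.
    move=> rr.
    have E : h' (h rr) = rr.
      by apply/ffunP=> m; rewrite !ffunE; apply/val_inj; rewrite /= inordK // ltnS ltnW.
    rewrite E eqxx andbT /cond.
    have V : forall m, (h rr m : nat) = rr m by move=> m; rewrite ffunE.
    rewrite (eq_bigr _ (fun m _ => V m)); congr (_ && _).
    by apply: eq_forallb => m; rewrite V.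
  by move=> rr _; rewrite /Tm; apply: eq_bigr => m _; rewrite ffunE.
move=> s /andP[/eqP Hs _]; apply/ffunP => m; rewrite !ffunE; apply/val_inj => /=.
rewrite inordK // ltnS (leq_trans _ Mb) // -Hs.
exact: (sum_ge (fun i => s i : nat)).
Qed.

Lemma HB_step b (P : pred 'I_a) M j : P j -> (M < b)%N ->
  y j * HB b P M = HB b P M.+1 - HB b (fun m => P m && (m != j)) M.+1.
Proof.
move=> Pj Mb; rewrite /HB [X in _ = X - _](bigID (fun s : {ffun 'I_a -> 'I_b.+1} => (s j : nat) == 0%N)) /=.
have -> : \sum_(i | cond b P M.+1 i && ((i j : nat) == 0%N)) Tm i =
          \sum_(rr | cond b (fun m => P m && (m != j)) M.+1 rr) Tm rr.
  apply: eq_bigl => s; rewrite /cond -andbA; congr (_ && _).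
  apply/idP/idP.
    case/andP => /forallP H0 H1; apply/forallP => m.
    case: (eqVneq m j) => [->|ne] //=; first by rewrite H1 implybT.
    by rewrite andbT; apply: H0.
  move/forallP => H; apply/andP; split.
    by apply/forallP => m; apply/implyP => nP; apply: (implyP (H m)); rewrite negb_and nP.
  by apply: (implyP (H j)); rewrite eqxx andbF.
rewrite [X in X - _]addrC addrK mulr_sumr.
pose inc (rr : {ffun 'I_a -> 'I_b.+1}) : {ffun 'I_a -> 'I_b.+1} :=
  [ffun m => inord (rr m + (m == j))].
pose dec (rr : {ffun 'I_a -> 'I_b.+1}) : {ffun 'I_a -> 'I_b.+1} :=
  [ffun m => inord (rr m - (m == j))].
rewrite [RHS](reindex_onto inc dec); last first.
  move=> s /andP[_ sj]; apply/ffunP => m; rewrite !ffunE; apply/val_inj => /=.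
  have H1 : (s m - (m == j) < b.+1)%N.
    exact: (leq_ltn_trans (leq_subr _ _) (ltn_ord (s m))).
  rewrite (inordK H1) inordK; last by case: (eqVneq m j) => [->|]; rewrite /= ?subn0 ?addn0 // subn1 addn1 prednK ?lt0n.
  by case: (eqVneq m j) => [->|]; rewrite /= ?subn0 ?addn0 // subn1 addn1 prednK ?lt0n.
have val_inc : forall rr : {ffun 'I_a -> 'I_b.+1}, (rr j < b)%N ->
    forall m, (inc rr m : nat) = (rr m + (m == j))%N.
  move=> rr rj m; rewrite ffunE inordK //.
  by case: (eqVneq m j) => [->|ne] /=; [rewrite addn1 ltnS | rewrite addn0].
have rjM : forall rr : {ffun 'I_a -> 'I_b.+1}, cond b P M rr -> (rr j < b)%N.
  move=> rr /andP[/eqP Hs _]; apply: leq_ltn_trans Mb; rewrite -Hs.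
  exact: (sum_ge (fun i => rr i : nat)).
apply: eq_big.
  move=> rr; case: (ltnP (rr j) b) => rj.
    have E : dec (inc rr) = rr.
      apply/ffunP => m; rewrite ffunE val_inc // addnK; exact: inord_val.
    rewrite E eqxx andbT val_inc // eqxx addn1 /= andbT /cond.
    have -> : (\sum_(m < a) (inc rr m : nat))%N = (\sum_(m < a) rr m).+1.
      rewrite (eq_bigr _ (fun m _ => val_inc rr rj m)) big_split /=.
      rewrite [X in (_ + X)%N](bigD1 j) //=.
      have -> : (\sum_(i < a | i != j) (i == j))%N = 0%N by apply: big1 => m /negbTE ->.
      by rewrite eqxx addn0 addn1.
    rewrite eqSS; congr (_ && _); apply: eq_forallb => m.
    rewrite val_inc //; case: (eqVneq m j) => [->|]; by rewrite ?Pj ?addn0.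
  have rjb : rr j = b :> nat by apply/eqP; rewrite eqn_leq rj -ltnS ltn_ord.
  have -> : (inc rr j : nat) = 0%N.
    by rewrite ffunE eqxx /inord /insubd insubN // rjb addn1 ltnn.
  rewrite andbF /=; apply/negbTE/negP => /rjM; by rewrite rjb ltnn.
move=> rr Hr; rewrite /Tm.
rewrite [RHS](eq_bigr (fun m => y m ^+ rr m * y m ^+ (m == j))); last first.
  by move=> m _; rewrite val_inc ?rjM // exprD.
rewrite big_split /= mulrC; congr (_ * _).
by rewrite (bigD1 j) //= eqxx big1 ?mulr1 // => m /negbTE ->.
Qed.

End HBsec.
Arguments HB {S a} y b P M.
Arguments Tm {S a} y {b} rr.
Arguments cond {a} b P M rr.


Section Ideal.
Variables (R : comNzRingType) (d l : nat).
Definition inI (p : {mpoly R[d]}) :=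
  exists c : 'I_d -> {mpoly R[d]}, p = \sum_(i < d) c i * 'X_i ^+ l.

Lemma inI0 : inI 0.
Proof. by exists (fun _ => 0); rewrite big1 // => i _; rewrite mul0r. Qed.
Lemma inID p q : inI p -> inI q -> inI (p + q).
Proof.
by move=> [c ->] [c' ->]; exists (fun i => c i + c' i); rewrite -big_split; apply: eq_bigr => i _; rewrite mulrDl.
Qed.
Lemma inIN p : inI p -> inI (- p).
Proof.
by move=> [c ->]; exists (fun i => - c i); rewrite -sumrN; apply: eq_bigr => i _; rewrite mulNr.
Qed.
Lemma inIB p q : inI p -> inI q -> inI (p - q).
Proof. by move=> hp hq; apply: inID => //; apply: inIN. Qed.
Lemma inIM q p : inI p -> inI (q * p).
Proof.
by move=> [c ->]; exists (fun i => q * c i); rewrite mulr_sumr; apply: eq_bigr => i _; rewrite mulrA.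
Qed.
Lemma inIX q i : inI (q * 'X_i ^+ l).
Proof.
exists (fun k => if k == i then q else 0).
rewrite (bigD1 i) //= eqxx big1 ?addr0 // => k /negbTE ->; by rewrite mul0r.
Qed.

Lemma HB_ideal a (A : 'I_a -> 'I_d) (c : 'I_a -> R) b (P : pred 'I_a) M k :
  (1 <= l)%N -> ~~ P k -> ((a - 1) * (l - 1) < M)%N ->
  inI (HB (fun m => c m *: 'X_(A m)) b P M).
Proof.
move=> hl nPk hM; rewrite /HB; apply: (big_ind inI); [exact: inI0 | exact: inID |].
move=> rr /andP[/eqP Hs /forallP Hsupp].
have [m Hm] : exists m : 'I_a, (l <= rr m)%N.
  case: (boolP [exists m : 'I_a, (l <= rr m)%N]) => [/existsP//|].
  rewrite negb_exists => /forallP H.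
  have rk : (rr k : nat) = 0%N by apply/eqP; exact: (implyP (Hsupp k) nPk).
  suff : (M <= (a - 1) * (l - 1))%N by rewrite leqNgt hM.
  rewrite -Hs (bigD1 k) //= rk add0n.
  apply: (@leq_trans (\sum_(i < a | i != k) (l - 1))%N).
    apply: leq_sum => i _; move: (H i); rewrite -ltnNge => hi; by rewrite -ltnS subn1 prednK.
  rewrite sum_nat_const.
  by rewrite cardC1 card_ord -subn1.
rewrite /Tm (bigD1 m) //= exprZn.
have -> : 'X_(A m) ^+ rr m = 'X_(A m) ^+ (rr m - l) * 'X_(A m) ^+ l :> {mpoly R[d]}.
  by rewrite -exprD subnK.
rewrite -scalerAl -mulrA [_ ^+ l * _]mulrC mulrA scalerAl; exact: inIX.
Qed.
End Ideal.
Arguments inI {R d} l p.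
Arguments HB_ideal {R d l a A c b P M} k.
Arguments inIM {R d l} q p.
Arguments inIB {R d l} p q.



Lemma eps_sq (R : comNzRingType) a (alpha : 'I_a -> bool) j :
  epsA alpha j R * epsA alpha j R = 1.
Proof.
rewrite /epsA -big_split /=; apply: big1 => k _.
by case: (alpha k); rewrite ?expr1 ?expr0 ?mulN1r ?opprK ?mulr1.
Qed.

Lemma sgn_sq (R : comNzRingType) (b : bool) (x : R) : (-1) ^+ b * ((-1) ^+ b * x) = x.
Proof. by case: b; rewrite ?expr1 ?expr0 ?mulN1r ?opprK ?mul1r. Qed.

Lemma eps_shift (R : comNzRingType) a (alpha : 'I_a -> bool) j :
  ~~ odd (alpha_weight alpha) ->
  (-1) ^+ alpha j * epsA alpha (ordS j) R = epsA alpha j R.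
Proof.
move=> hw.
case: (ltnP j.+1 a) => hj.
  rewrite /epsA.
  have -> : (ordS j : nat) = j.+1 by rewrite /= modn_small.
  rewrite (bigD1 j) ?ltnSn //= sgn_sq; apply: eq_bigl => k.
  by rewrite ltnS ltn_neqAle andbC.
have ja : j.+1 = a by apply/eqP; rewrite eqn_leq hj ltn_ord.
have -> : epsA alpha (ordS j) R = 1.
  rewrite /epsA big_pred0 // => k.
  by rewrite /= ja modnn ltn0.
have tot : \prod_(k < a) (-1) ^+ alpha k = 1 :> R.
  rewrite prodrXr -signr_odd.
  by move: hw; rewrite /alpha_weight => /negbTE ->.
move: tot; rewrite (bigD1 j) //= => tot.
have E : \prod_(i < a | i != j) (-1) ^+ alpha i = epsA alpha j R.
  apply: eq_bigl => k; rewrite ltn_neqAle.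
  have hk : (k <= j)%N by rewrite -ltnS ja ltn_ord.
  by rewrite hk andbT.
by rewrite E in tot; rewrite -{1}(@sgn_sq R (alpha j) (epsA alpha j R)) tot mulr1.
Qed.


Lemma sgnZ (R : comNzRingType) d (b : bool) (p : {mpoly R[d]}) :
  (-1) ^+ b * p = ((-1) ^+ b : R) *: p.
Proof. by case: b; rewrite ?expr1 ?expr0 ?mul1r ?scale1r ?mulN1r ?scaleN1r. Qed.

Theorem mainTheorem11 (R : comRingType) (l d a : nat) (hl : (1 <= l)%N) (hd : (1 <= d)%N)
  (A : 'I_a -> 'I_d) (hA_inj : injective A)
  (alpha : 'I_a -> bool) (halpha : ~~ odd (alpha_weight alpha))
  (j : 'I_a) (r : nat) :
  eq_trunc l ('X_(A j) * hA R l A alpha r)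
             ((-1) ^+ alpha j * hA R l A alpha r * 'X_(sigmaA A j)).
Proof.
pose N := ((a - 1) * (l - 1) + r)%N.
pose y := fun m : 'I_a => epsA alpha m R *: ('X_(A m) : {mpoly R[d]}).
have hAE : hA R l A alpha r = HB y N.+1 predT N.
  rewrite -HB_widen // /hA /HB /=; apply: eq_bigl => rr.
  rewrite /cond (_ : [forall m, _] = true) ?andbT //.
  by apply/forallP.
set h := HB y N.+1 predT N.
have L1 : 'X_(A j) * h = epsA alpha j R *: (y j * h).
  by rewrite /y -scalerAl scalerA eps_sq scale1r.
have L2 : (-1) ^+ alpha j * h * 'X_(A (ordS j)) = epsA alpha j R *: (y (ordS j) * h).
  rewrite /y -scalerAl scalerA -(@eps_shift R _ _ j halpha).
  by rewrite -[X in X *: _]mulrA eps_sq mulr1 -mulrA sgnZ mulrC.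
suff : inI l ('X_(A j) * h - (-1) ^+ alpha j * h * 'X_(sigmaA A j)) by rewrite hAE.
rewrite /sigmaA L1 L2 -scalerBr -mul_mpolyC.
apply: inIM.
rewrite /h !HB_step //.
rewrite opprB addrC addrA addrNK.
have NL : ((a - 1) * (l - 1) < N.+1)%N by rewrite ltnS leq_addr.
apply: inIB; [apply: (HB_ideal (ordS j)) | apply: (HB_ideal j)]; by rewrite //= eqxx.
Qed.
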